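(* Let $\mu>0$ and $\lambda_1>0$, and consider the system $$\frac{dx}{dt}=\lambda_1\bigl(2\mu y-4\mu xy-2x^2-2xy+x\bigr),\qquad \frac{dy}{dt}=\lambda_1\bigl(\mu y-4\mu y^2-2xy-2y^2+y\bigr)$$ on the closed quadrangle $Q\subset\mathbb{R}^2$ defined by $y\ge x/2$, $y\ge 1/2-x$, $y\le 1/3$, $y\le 1/2-x/2$ (with vertices $(1/3,1/6)$, $(1/2,1/4)$, $(1/3,1/3)$, $(1/6,1/3)$). For each value of $\mu$, the system has a unique, globally attracting fixed point $\underline{x}_c(\mu)=(x_c(\mu),y_c(\mu))$ in $Q$. This fixed point lies on the edge $\partial Q_1=Q\cap\{y=x/2\}$. Moreover, the map $\mu\mapsto\underline{x}_c(\mu)$ is one-to-one and onto the interior of the edge $\partial Q_1$, and as $\mu$ grows from $0$ to $\infty$, $\underline{x}_c(\mu)$ changes monotonically between the two endpoints $(1/3,1/6)$ and $(1/2,1/4)$ of this edge.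
   Context: Here $x=V/N^{\star}$ and $y=F/N^{\star}$ are the inverse symbolic coordinates of a crack mosaic ($V$ nodes, $F$ faces, total corner degree $N^{\star}$), $Q$ is the domain of convex mosaics, and the parameter $\mu$ is the ratio of the rate of secondary cracking events to the rate of crack healing events. ''Globally attracting in $Q$'' means every solution starting in $Q$ converges to it as $t\to\infty$. *)

(* Defs.v *)
From Stdlib Require Import Reals Lra.
From Coquelicot Require Import Coquelicot.
Open Scope R_scope.

Definition Fx (lam mu x y : R) : R :=
  lam * (2 * mu * y - 4 * mu * x * y - 2 * x ^ 2 - 2 * x * y + x).
Definition Fy (lam mu x y : R) : R :=
  lam * (mu * y - 4 * mu * y ^ 2 - 2 * x * y - 2 * y ^ 2 + y).

Definition inQ (x y : R) : Prop :=
  x / 2 <= y /\ 1 / 2 - x <= y /\ y <= 1 / 3 /\ y <= 1 / 2 - x / 2.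

Definition is_solution (lam mu : R) (x y : R -> R) : Prop :=
  (forall t, 0 < t ->
      is_derive x t (Fx lam mu (x t) (y t)) /\
      is_derive y t (Fy lam mu (x t) (y t))) /\
  filterlim x (at_right 0) (locally (x 0)) /\
  filterlim y (at_right 0) (locally (y 0)).

(* Main.v *)
Require Import Defs.
From Stdlib Require Import Reals Lra.
From Coquelicot Require Import Coquelicot.
Open Scope R_scope.

Lemma is_derive_eq (f : R -> R) x l1 l2 : is_derive f x l1 -> l1 = l2 -> is_derive f x l2.
Proof. intros H ->; exact H. Qed.

Lemma rc_of_loc (f : R -> R) L : filterlim f (locally 0) L -> filterlim f (at_right 0) L.
Proof.
  intros H P HP. specialize (H P HP). destruct H as [e He]. exists e. intros y Hy _. apply He; auto.
Qed.

Lemma lim_plus {T} (F : (T -> Prop) -> Prop) {FF : Filter F} (f g : T -> R) a b :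
  filterlim f F (locally a) -> filterlim g F (locally b) ->
  filterlim (fun t => f t + g t) F (locally (a + b)).
Proof. intros Hf Hg. eapply filterlim_comp_2; eauto. apply (filterlim_plus a b). Qed.

Lemma lim_mult {T} (F : (T -> Prop) -> Prop) {FF : Filter F} (f g : T -> R) a b :
  filterlim f F (locally a) -> filterlim g F (locally b) ->
  filterlim (fun t => f t * g t) F (locally (a * b)).
Proof. intros Hf Hg. eapply filterlim_comp_2; eauto. apply (filterlim_mult a b). Qed.

Lemma lim_eq {T} (F : (T -> Prop) -> Prop) (f : T -> R) a b :
  filterlim f F (locally a) -> a = b -> filterlim f F (locally b).
Proof. intros H ->; exact H. Qed.

Lemma rc_exp c : filterlim (fun t => exp (- c * t)) (at_right 0) (locally 1).
Proof.
  apply rc_of_loc. apply (lim_eq _ _ (exp (-c * 0))); [|rewrite Rmult_0_r, exp_0; auto].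
  apply (ex_derive_continuous (fun t => exp (- c * t))). auto_derive. auto.
Qed.

Lemma lin_zero (f k : R -> R) :
  f 0 = 0 -> filterlim f (at_right 0) (locally 0) ->
  (forall t, 0 < t -> is_derive f t (k t * f t)) ->
  (forall T, 0 < T -> exists K, forall t, 0 < t <= T -> Rabs (k t) <= K) ->
  forall t, 0 <= t -> f t = 0.
Proof.
  intros H0 Hc Hd Hb t Ht.
  destruct (Req_dec t 0) as [->|Htn]; [exact H0|].
  assert (Htp: 0 < t) by lra.
  destruct (Hb t Htp) as [K HK].
  assert (HK0 : 0 <= K) by (specialize (HK t ltac:(lra)); pose proof (Rabs_pos (k t)); lra).
  set (g := fun s => f s * f s * exp (-(2*K) * s)).
  set (dg := fun c => (2 * k c * (f c * f c) - 2*K * (f c * f c)) * exp (-(2*K)*c)).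
  assert (Hg : forall c, 0 < c -> is_derive g c (dg c)).
  { intros c Hc0.
    assert (He : is_derive (fun t => exp (-(2*K)*t)) c (-(2*K) * exp(-(2*K)*c))) by (auto_derive; auto; ring).
    pose proof (is_derive_mult _ _ _ _ _ (Hd c Hc0) (Hd c Hc0) (fun n m => Rmult_comm n m)) as H1.
    pose proof (is_derive_mult _ _ _ _ _ H1 He (fun n m => Rmult_comm n m)) as H2.
    apply (is_derive_eq _ _ _ _ H2). unfold dg, minus, plus, opp, mult; simpl. ring. }
  assert (Hdec: forall s, 0 < s < t -> g t <= g s).
  { intros s Hs.
    destruct (MVT_gen g s t dg) as [c [Hc1 Hc2]].
    - intros c Hcc. rewrite Rmin_left, Rmax_right in Hcc by lra. apply Hg; lra.
    - intros c Hcc. rewrite Rmin_left, Rmax_right in Hcc by lra.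
      apply continuity_pt_filterlim. apply (ex_derive_continuous g).
      eexists; apply Hg; lra.
    - rewrite Rmin_left, Rmax_right in Hc1 by lra.
      assert (Hk : k c <= K) by (specialize (HK c ltac:(lra)); pose proof (Rle_abs (k c)); lra).
      assert (Hn : dg c <= 0).
      { unfold dg. pose proof (exp_pos (-(2*K)*c)). 
        assert (0 <= f c * f c) by nra.
        assert ((2 * k c * (f c * f c) - 2*K * (f c * f c)) <= 0) by nra. nra. }
      nra. }
  assert (Hgt : g t <= 0).
  { destruct (Rle_lt_dec (g t) 0) as [Hle|Hlt]; [exact Hle|exfalso].
    set (eta := Rmin 1 (g t / 2)).
    assert (Heta : 0 < eta) by (unfold eta; apply Rmin_case; lra).
    assert (HP : locally 0 (fun y => Rabs y < eta)).
    { exists (mkposreal eta Heta). intros y Hy. change (Rabs (y - 0) < eta) in Hy.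
      rewrite Rminus_0_r in Hy. exact Hy. }
    destruct (Hc _ HP) as [d Hd'].
    set (s := Rmin (d/2) (t/2)).
    assert (Hs0 : 0 < s) by (unfold s; apply Rmin_case; pose proof (cond_pos d); lra).
    assert (Hs1 : s < t) by (unfold s; pose proof (Rmin_r (d/2) (t/2)); lra).
    assert (Hsd : s < d) by (unfold s; pose proof (Rmin_l (d/2) (t/2)); pose proof (cond_pos d); lra).
    assert (Hfs : Rabs (f s) < eta).
    { apply Hd'; [|exact Hs0]. change (Rabs (s - 0) < d). rewrite Rminus_0_r, Rabs_pos_eq; lra. }
    specialize (Hdec s (conj Hs0 Hs1)).
    assert (Hex : exp (-(2*K)*s) <= 1).
    { rewrite <- exp_0. destruct (Req_dec (-(2*K)*s) 0) as [->|]; [lra|].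
      left. apply exp_increasing. nra. }
    assert (Hff : f s * f s < eta * eta).
    { assert (Heq : f s * f s = Rabs (f s) * Rabs (f s)) by (rewrite <- Rabs_mult; rewrite Rabs_pos_eq; nra).
      rewrite Heq. pose proof (Rabs_pos (f s)). nra. }
    assert (eta <= 1) by (unfold eta; apply Rmin_l).
    assert (eta <= g t / 2) by (unfold eta; apply Rmin_r).
    assert (g s <= f s * f s) by (unfold g; pose proof (exp_pos (-(2*K)*s)); nra).
    nra. }
  unfold g in Hgt. pose proof (exp_pos (-(2*K)*t)).
  assert (f t * f t <= 0) by nra. nra.
Qed.

Lemma bnd (f : R -> R) : (forall t, 0 < t -> ex_derive f t) ->
  filterlim f (at_right 0) (locally (f 0)) ->
  forall T, 0 < T -> exists M, forall t, 0 < t <= T -> Rabs (f t) <= M.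
Proof.
  intros Hd Hc T HT.
  set (g := fun t => f (Rmax 0 t)).
  assert (Hg : forall c, 0 <= c <= T -> continuity_pt g c).
  { intros c Hc0. apply continuity_pt_filterlim.
    destruct (Req_dec c 0) as [->|Hne].
    - intros P HP. unfold filtermap.
      assert (Hg0 : g 0 = f 0) by (unfold g; rewrite Rmax_left; lra).
      rewrite Hg0 in HP.
      destruct (Hc P HP) as [d Hd']. exists d. intros y Hy. unfold g.
      destruct (Rle_lt_dec y 0).
      + rewrite Rmax_left by lra. apply locally_singleton. exact HP.
      + rewrite Rmax_right by lra. apply Hd'; auto.
    - change (continuous g c).
      apply (continuous_ext_loc g f).
      + assert (Hcp : 0 < c) by lra. exists (mkposreal c Hcp). intros y Hy.
        change (Rabs (y - c) < c) in Hy. unfold g. rewrite Rmax_right; [reflexivity|].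
        apply Rabs_def2 in Hy. lra.
      + apply (ex_derive_continuous (K:=R_AbsRing) (V:=R_NormedModule) f c). apply Hd. lra. }
  destruct (continuity_ab_maj g 0 T ltac:(lra) Hg) as [Mx [HM1 HM2]].
  destruct (continuity_ab_min g 0 T ltac:(lra) Hg) as [mx [Hm1 Hm2]].
  exists (Rmax (g Mx) (- g mx)). intros t Ht.
  assert (Hgt : g t = f t) by (unfold g; rewrite Rmax_right; lra).
  specialize (HM1 t ltac:(lra)). specialize (Hm1 t ltac:(lra)).
  apply Rabs_le. pose proof (Rmax_l (g Mx) (- g mx)). pose proof (Rmax_r (g Mx) (- g mx)). lra.
Qed.

Lemma is_lim_eq (f : R -> R) (x : Rbar) (l1 l2 : R) : is_lim f x l1 -> l1 = l2 -> is_lim f x l2.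
Proof. intros H ->; exact H. Qed.

Lemma lim_scal (f : R -> R) a (l : R) : is_lim f p_infty l -> is_lim (fun t => a * f t) p_infty (a * l).
Proof. intros H. exact (is_lim_scal_l f a p_infty l H). Qed.

Lemma exp_lim c : 0 < c -> is_lim (fun t => exp (- c * t)) p_infty 0.
Proof.
  intros Hc. apply (is_lim_comp exp (fun t => - c * t) p_infty 0 m_infty).
  - exact is_lim_exp_m.
  - apply is_lim_spec. intros M. exists (Rabs M / c). intros t Ht.
    assert (Rabs M < c * t).
    { apply Rmult_lt_compat_l with (r := c) in Ht; [|lra].
      replace (c * (Rabs M / c)) with (Rabs M) in Ht by (field; lra). exact Ht. }
    pose proof (Rle_abs (- M)). rewrite Rabs_Ropp in H0. simpl. lra.
  - exists 0. intros t _. discriminate.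
Qed.

Lemma exp_le1 c t : 0 <= c -> 0 <= t -> exp (- c * t) <= 1.
Proof.
  intros. rewrite <- exp_0. destruct (Req_dec (-c*t) 0) as [->|]; [lra|].
  left. apply exp_increasing. nra.
Qed.

Ltac fixeq := match goal with |- ?a = ?b => change (@eq R a b) end.

Definition xcf (mu : R) := (mu + 1) / (2 * mu + 3).
Definition ycf (mu : R) := xcf mu / 2.

Lemma attract lam mu x y : 0 < lam -> 0 < mu -> is_solution lam mu x y -> inQ (x 0) (y 0) ->
  is_lim x p_infty (xcf mu) /\ is_lim y p_infty (ycf mu).
Proof.
  intros Hlam Hmu [Hd [Hx0 Hy0]] [q1 [q2 [q3 q4]]].
  set (x0 := x 0) in *. set (y0 := y 0) in *.
  assert (Hy0p : 0 < y0) by lra.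
  set (C := (x0 - 2 * y0) / y0).
  set (c1 := lam * mu). set (c2 := lam * (mu + 1)).
  assert (Hc1 : 0 < c1) by (unfold c1; nra).
  assert (Hc2 : 0 < c2) by (unfold c2; nra).
  assert (Bx := bnd x (fun t Ht => ex_intro _ _ (proj1 (Hd t Ht))) Hx0).
  assert (By := bnd y (fun t Ht => ex_intro _ _ (proj2 (Hd t Ht))) Hy0).
  set (E := fun s => x s - 2 * y s - C * (exp (- c1 * s) * y s)).
  set (k1 := fun s => lam * (1 - 4 * mu * y s - 2 * x s - 2 * y s)).
  assert (HE : forall t, 0 <= t -> E t = 0).
  { apply (lin_zero E k1).
    - unfold E. rewrite !Rmult_0_r, !exp_0. change (x 0) with x0; change (y 0) with y0. unfold C. field. lra.
    - apply (filterlim_ext (fun s => x s + ((-2) * y s + (-C) * (exp (-c1*s) * y s)))).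
      { intro s; unfold E; ring. }
      eapply lim_eq.
      + apply (lim_plus (at_right 0)); [exact Hx0|]. apply (lim_plus (at_right 0)); apply (lim_mult (at_right 0)).
        * apply filterlim_const.
        * exact Hy0.
        * apply filterlim_const.
        * apply (lim_mult (at_right 0)); [apply rc_exp|exact Hy0].
      + unfold C. fixeq. field. lra.
    - intros t Ht. destruct (Hd t Ht) as [Hxd Hyd].
      assert (He : is_derive (fun t => exp (- c1*t)) t (- c1 * exp(- c1*t))) by (auto_derive; auto; ring).
      pose proof (is_derive_minus _ _ _ _ _ Hxd (is_derive_scal _ _ 2 _ Hyd)) as H1.
      pose proof (is_derive_scal _ _ C _ (is_derive_mult _ _ _ _ _ He Hyd (fun n m => Rmult_comm n m))) as H2.
      pose proof (is_derive_minus _ _ _ _ _ H1 H2) as H3.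
      apply (is_derive_eq _ _ _ _ H3). unfold minus, plus, opp, mult; simpl.
      unfold k1, E, Fx, Fy, c1. ring.
    - intros T HT. destruct (Bx T HT) as [Mx HMx]. destruct (By T HT) as [My HMy].
      exists (lam * (1 + 4 * mu * My + 2 * Mx + 2 * My)). intros t Ht.
      specialize (HMx t Ht). specialize (HMy t Ht).
      apply Rabs_le_between in HMx. apply Rabs_le_between in HMy.
      unfold k1. rewrite Rabs_mult, (Rabs_pos_eq lam) by lra.
      apply Rmult_le_compat_l; [lra|]. apply Rabs_le. split; nra. }
  set (Z := fun s => (1 / y0) * exp (- c2 * s) + ((4 * mu + 6) / (mu + 1)) * (1 - exp (- c2 * s))
                     + 2 * C * (exp (- c1 * s) - exp (- c2 * s))).
  set (D := fun s => Z s * y s - 1).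
  set (k2 := fun s => - (lam * ((4 * mu + 6) + 2 * C * exp (- c1 * s)) * y s)).
  assert (HD : forall t, 0 <= t -> D t = 0).
  { apply (lin_zero D k2).
    - unfold D, Z. rewrite !Rmult_0_r, !exp_0. change (y 0) with y0. field. lra.
    - apply (filterlim_ext (fun s => Z s * y s + -1)).
      { intro s; unfold D; ring. }
      eapply lim_eq.
      + apply (lim_plus (at_right 0)); [|apply filterlim_const]. apply (lim_mult (at_right 0)); [|exact Hy0].
        apply rc_of_loc. apply (ex_derive_continuous (K:=R_AbsRing) (V:=R_NormedModule) Z 0).
        unfold Z. auto_derive. lra.
      + fixeq. unfold Z. rewrite !Rmult_0_r, !exp_0. field. lra.
    - intros t Ht. destruct (Hd t Ht) as [Hxd Hyd].
      assert (HZ : is_derive Z t (- c2 * Z t + lam * ((4 * mu + 6) + 2 * C * exp (- c1 * t)))).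
      { unfold Z. auto_derive; [lra|]. unfold c1, c2. field. lra. }
      pose proof (is_derive_minus _ _ _ _ _ (is_derive_mult _ _ _ _ _ HZ Hyd (fun n m => Rmult_comm n m)) (is_derive_const 1 t)) as H3.
      apply (is_derive_eq _ _ _ _ H3). unfold minus, plus, opp, mult, zero; simpl.
      assert (Hxt : x t = 2 * y t + C * (exp (- c1 * t) * y t)).
      { pose proof (HE t ltac:(lra)) as H; unfold E in H; lra. }
      unfold k2, D, Fy. rewrite Hxt. unfold c1, c2. ring.
    - intros T HT. destruct (By T HT) as [My HMy].
      exists (lam * ((4 * mu + 6) + 2 * Rabs C) * My). intros t Ht.
      specialize (HMy t Ht).
      unfold k2. rewrite Rabs_Ropp, Rabs_mult, Rabs_mult, (Rabs_pos_eq lam) by lra.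
      assert (Hb : Rabs ((4 * mu + 6) + 2 * C * exp (- c1 * t)) <= (4 * mu + 6) + 2 * Rabs C).
      { eapply Rle_trans; [apply Rabs_triang|].
        rewrite Rabs_pos_eq by lra. rewrite Rabs_mult, Rabs_mult, (Rabs_pos_eq 2) by lra.
        rewrite (Rabs_pos_eq (exp _)) by (left; apply exp_pos).
        pose proof (exp_le1 c1 t ltac:(lra) ltac:(lra)). pose proof (Rabs_pos C). nra. }
      pose proof (Rabs_pos (y t)). pose proof (Rabs_pos ((4 * mu + 6) + 2 * C * exp (- c1 * t))).
      apply Rmult_le_compat; try nra. }
  assert (HZl : is_lim Z p_infty ((4 * mu + 6) / (mu + 1))).
  { unfold Z. eapply is_lim_eq.
    - apply is_lim_plus'; [apply is_lim_plus'|].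
      + apply lim_scal. apply exp_lim; lra.
      + apply lim_scal. apply is_lim_minus'; [apply is_lim_const|apply exp_lim; lra].
      + apply lim_scal. apply is_lim_minus'; apply exp_lim; lra.
    - field. lra. }
  assert (Hyl : is_lim y p_infty (ycf mu)).
  { apply (is_lim_ext_loc (fun t => / Z t)).
    - exists 0. intros t Ht. pose proof (HD t ltac:(lra)) as H. unfold D in H.
      assert (Z t <> 0) by (intro H'; rewrite H' in H; lra).
      field_simplify_eq; [lra|auto].
    - pose proof (is_lim_inv _ _ _ HZl) as H. simpl in H.
      eapply is_lim_eq; [apply H|].
      + intro H'. injection H'. intro H''. 
        assert ((4 * mu + 6) / (mu + 1) > 0) by (apply Rdiv_lt_0_compat; lra). lra.
      + unfold ycf, xcf. field. lra. }
  split; [|exact Hyl].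
  apply (is_lim_ext_loc (fun t => 2 * y t + C * (exp (- c1 * t) * y t))).
  - exists 0. intros t Ht. pose proof (HE t ltac:(lra)) as H. unfold E in H. lra.
  - eapply is_lim_eq.
    + apply is_lim_plus'; [apply lim_scal; exact Hyl|].
      apply lim_scal. apply (is_lim_mult _ _ _ 0 (ycf mu)); [apply exp_lim; lra|exact Hyl|exact I].
    + unfold ycf. field.
Qed.

Lemma xc_id mu : 0 <= mu -> xcf mu * (2 * mu + 3) = mu + 1.
Proof. intros. unfold xcf. field. lra. Qed.

Lemma xc_bounds mu : 0 < mu -> 1/3 < xcf mu < 1/2.
Proof. intros H. pose proof (xc_id mu ltac:(lra)). split; nra. Qed.

Theorem proposition1 (lam : R) (Hlam : 0 < lam) :
  exists xc yc : R -> R,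
    (forall mu : R, 0 < mu ->
       inQ (xc mu) (yc mu) /\
       Fx lam mu (xc mu) (yc mu) = 0 /\ Fy lam mu (xc mu) (yc mu) = 0 /\
       (forall x y, inQ x y -> Fx lam mu x y = 0 -> Fy lam mu x y = 0 ->
          x = xc mu /\ y = yc mu) /\
       (forall x y : R -> R, is_solution lam mu x y -> inQ (x 0) (y 0) ->
          is_lim x p_infty (xc mu) /\ is_lim y p_infty (yc mu)) /\
       yc mu = xc mu / 2) /\
    (forall mu1 mu2, 0 < mu1 -> 0 < mu2 ->
       xc mu1 = xc mu2 -> yc mu1 = yc mu2 -> mu1 = mu2) /\
    (forall x, 1 / 3 < x < 1 / 2 ->
       exists mu, 0 < mu /\ xc mu = x /\ yc mu = x / 2) /\
    (forall mu1 mu2, 0 < mu1 -> mu1 < mu2 ->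
       xc mu1 < xc mu2 /\ yc mu1 < yc mu2) /\
    filterlim xc (at_right 0) (locally (1 / 3)) /\
    filterlim yc (at_right 0) (locally (1 / 6)) /\
    is_lim xc p_infty (1 / 2) /\ is_lim yc p_infty (1 / 4).
Proof.
  exists xcf, ycf.
  assert (Hxinf : is_lim xcf p_infty (1/2)).
  { apply is_lim_spec. intros eps. exists (1 / eps). intros t Ht.
    pose proof (cond_pos eps) as He.
    assert (Ht0 : 0 < t) by (assert (0 < 1/eps) by (apply Rdiv_lt_0_compat; lra); lra).
    replace (xcf t - 1/2) with (- (1 / (2 * (2 * t + 3)))) by (unfold xcf; field; lra).
    rewrite Rabs_Ropp, Rabs_pos_eq by (left; apply Rdiv_lt_0_compat; lra).
    apply Rlt_div_l; [lra|].
    assert (eps * (1/eps) = 1) by (field; lra). nra. }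
  split; [|split; [|split; [|split; [|split; [|split; [|split]]]]]].
  - intros mu Hmu. pose proof (xc_bounds mu Hmu) as [b1 b2].
    pose proof (xc_id mu ltac:(lra)) as Hid.
    split; [|split; [|split; [|split; [|split]]]].
    + unfold inQ, ycf. lra.
    + unfold Fx, ycf. unfold xcf. field. lra.
    + unfold Fy, ycf. unfold xcf. field. lra.
    + intros x y [q1 [q2 [q3 q4]]] Hfx Hfy.
      assert (Hy : 0 < y) by lra.
      assert (HG0 : lam * (y * (mu + 1 - 4*mu*y - 2*x - 2*y)) = 0) by (rewrite <- Hfy; unfold Fy; ring).
      apply Rmult_integral in HG0. destruct HG0 as [|HG0]; [lra|].
      apply Rmult_integral in HG0. destruct HG0 as [|HG]; [lra|].
      assert (HF0 : lam * ((x - 2*y) * ((mu + 1 - 4*mu*y - 2*x - 2*y) - mu)) = 0)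
        by (replace 0 with (Fx lam mu x y - 2 * Fy lam mu x y) by lra; unfold Fx, Fy; ring).
      rewrite HG in HF0.
      apply Rmult_integral in HF0. destruct HF0 as [|HF0]; [lra|].
      apply Rmult_integral in HF0. destruct HF0 as [Hxy|]; [|lra].
      assert (Hyv : y * (4 * mu + 6) = mu + 1) by lra.
      assert (Hyc : y = ycf mu).
      { unfold ycf. apply (Rmult_eq_reg_r (2 * (2 * mu + 3))); [|lra].
        replace (xcf mu / 2 * (2 * (2 * mu + 3))) with (xcf mu * (2 * mu + 3)) by field.
        rewrite Hid. lra. }
      split; [|exact Hyc]. unfold ycf in Hyc. lra.
    + intros x y Hs HQ. apply (attract lam mu x y); auto.
    + reflexivity.
  - intros mu1 mu2 H1 H2 Hx _.
    pose proof (xc_id mu1 ltac:(lra)) as I1. pose proof (xc_id mu2 ltac:(lra)) as I2.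
    pose proof (xc_bounds mu1 H1) as [b1 b2].
    rewrite Hx in I1.
    assert (Hz : (mu1 - mu2) * (2 * xcf mu2 - 1) = 0) by lra.
    apply Rmult_integral in Hz. destruct Hz; lra.
  - intros x Hx. exists ((3 * x - 1) / (1 - 2 * x)).
    assert (Hm : 0 < (3 * x - 1) / (1 - 2 * x)) by (apply Rdiv_lt_0_compat; lra).
    assert (Hxc : xcf ((3 * x - 1) / (1 - 2 * x)) = x) by (unfold xcf; field; lra).
    split; [exact Hm|]. split; [exact Hxc|]. unfold ycf. rewrite Hxc. reflexivity.
  - intros mu1 mu2 H1 H2.
    assert (Hd : xcf mu2 - xcf mu1 = (mu2 - mu1) / ((2 * mu1 + 3) * (2 * mu2 + 3)))
      by (unfold xcf; field; lra).
    assert (0 < (mu2 - mu1) / ((2 * mu1 + 3) * (2 * mu2 + 3)))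
      by (apply Rdiv_lt_0_compat; nra).
    unfold ycf. lra.
  - apply rc_of_loc. apply (lim_eq _ _ (xcf 0)); [|unfold xcf; fixeq; field].
    apply (ex_derive_continuous (K:=R_AbsRing) (V:=R_NormedModule) xcf 0).
    unfold xcf. auto_derive. lra.
  - apply rc_of_loc. apply (lim_eq _ _ (ycf 0)); [|unfold ycf, xcf; fixeq; field].
    apply (ex_derive_continuous (K:=R_AbsRing) (V:=R_NormedModule) ycf 0).
    unfold ycf, xcf. auto_derive. lra.
  - exact Hxinf.
  - unfold ycf. eapply is_lim_eq; [apply (is_lim_scal_r xcf (/2) p_infty (1/2) Hxinf)|].
    simpl. field.
Qed.
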